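(* Let $a,N$ be integers with $1\le a\le N$. For any $n,d\in\mathbb{N}_0$, $c_1,\dots,c_d\in\mathbb{N}\setminus\{2\}$ and $b_0,\dots,b_d\in\mathbb{N}_0$, $${}_nt^{\star}_{N,a}(\{2\}^{b_0},c_1,\{2\}^{b_1},\dots,c_d,\{2\}^{b_d})=\sum_{n\ge k_0\ge k_1\ge\cdots\ge k_d\ge0}\frac{N\left[\left(\frac{a}{N}\right)_{n+1}\right]^2}{(n-k_0)!\left(\frac{2a}{N}\right)_{n+k_0+1}}\cdot\frac{\left(\frac{2a}{N}\right)_{k_d}}{k_d!(Nk_d+a)}\prod_{i=0}^{d}\frac{(-1)^{k_i\delta_i}}{(Nk_i+a)^{2b_i+3-\delta_i}}W_{k_{i-1},k_i}^{\#}(\{1\}^{c_i-3}),$$ where $k_{-1}=-1$, $c_0=1$, $c_{d+1}=0$ and $\delta_i=\delta(c_i)+\delta(c_{i+1})$.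
   Context: $(x)_m$ is the Pochhammer symbol. $\{s\}^c$ is $s$ repeated $c$ times if $c>0$ and empty otherwise. ${}_nt^{\star}_{N,a}(s_1,\dots,s_u)=\sum_{n\ge k_1\ge\cdots\ge k_u\ge0}\prod_{j}(Nk_j+a)^{-s_j}$, ${}_nt^{\star}_{N,a}(\emptyset)=1$. $\delta(0)=2$, $\delta(1)=1$, $\delta(c)=0$ for $c\ge3$. $\triangle(k,m)=0$ if $k=m$, $1$ otherwise. For an index $\boldsymbol{s}=(s_1,\dots,s_u)$ of positive integers and integers $k,m$: $W_{k,m}^{\#}(\boldsymbol{s})=\sum_{k\ge l_1\ge\cdots\ge l_u\ge m}2^{\triangle(k,l_1)+\triangle(l_1,l_2)+\cdots+\triangle(l_u,m)}\prod_j(Nl_j+a)^{-s_j}$ if $\boldsymbol{s}$ is nonempty and $k\ge m$, and $W_{k,m}^{\#}(\boldsymbol{s})=2^{\triangle(k,m)}$ otherwise. *)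

(* Defs.v *)
From HB Require Import structures.
From mathcomp Require Import all_boot all_order all_algebra.
Set Implicit Arguments. Unset Strict Implicit. Unset Printing Implicit Defensive.
Import Order.TTheory GRing.Theory Num.Theory.
Local Open Scope ring_scope.

Section Defs.
Variable R : realFieldType.

Definition poch (x : R) (m : nat) : R := \prod_(i < m) (x + i%:R).

Definition lin (N a : nat) (k : int) : R := ((N%:Z * k + a%:Z)%R)%:~R.

(* nt*_{N,a}(s_1,...,s_u) = sum_{n >= k_1 >= ... >= k_u >= 0} prod_j (N k_j + a)^{-s_j} *)
Fixpoint tstar (N a n : nat) (s : seq nat) : R :=
  match s with
  | [::] => 1
  | s1 :: r => \sum_(k < n.+1) (lin N a k ^ (- (s1%:Z))) * tstar N a k r
  end.

Definition tri (k m : int) : nat := if k == m then 0%N else 1%N.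

(* sum_{k >= l_1 >= ... >= l_u >= m} 2^{tri(k,l_1)+...+tri(l_u,m)} prod_j (N l_j + a)^{-s_j}
   (for k >= m; the empty chain gives 2^{tri(k,m)}) *)
Fixpoint Wrec (N a : nat) (k m : int) (s : seq nat) : R :=
  match s with
  | [::] => 2%:R ^+ tri k m
  | s1 :: r =>
      \sum_(j < (absz (k - m)).+1)
        if (m + j%:Z <= k)%R then
          2%:R ^+ tri k (m + j%:Z) * lin N a (m + j%:Z) ^ (- (s1%:Z))
            * Wrec N a (m + j%:Z) m r
        else 0
  end.

Definition Wsharp (N a : nat) (k m : int) (s : seq nat) : R :=
  if (s != [::]) && (m <= k)%R then Wrec N a k m s else 2%:R ^+ tri k m.

End Defs.

Definition deltaf (x : nat) : nat :=
  if x == 0%N then 2%N else if x == 1%N then 1%N else 0%N.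

Fixpoint chains (m len : nat) : seq (seq nat) :=
  match len with
  | 0 => [:: [::]]
  | l.+1 => flatten [seq [seq k :: t | t <- chains k l] | k <- iota 0 m.+1]
  end.

Definition tindex (d : nat) (c b : nat -> nat) : seq nat :=
  nseq (b 0%N) 2%N ++ flatten [seq c i :: nseq (b i) 2%N | i <- iota 1 d].

Definition cext (d : nat) (c : nat -> nat) (i : nat) : nat :=
  if i == 0%N then 1%N else if i == d.+1 then 0%N else c i.

Definition deltai (d : nat) (c : nat -> nat) (i : nat) : nat :=
  (deltaf (cext d c i) + deltaf (cext d c i.+1))%N.

Definition kprev (ks : seq nat) (i : nat) : int :=
  if i == 0%N then (-1)%R else (nth 0%N ks i.-1)%:Z.

(* Main.v *)
Require Import Defs.
From HB Require Import structures.
From mathcomp Require Import all_boot all_order all_algebra.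
From mathcomp Require Import ring lra zify.
Import Order.TTheory GRing.Theory Num.Theory.
Local Open Scope ring_scope.

Section Proof.
Variable R : realFieldType.
Variables a N : nat.
Hypothesis Ha : (1 <= a)%N.
Hypothesis HaN : (a <= N)%N.

Definition xx : R := a%:R / N%:R.
Definition yy : R := 2 * a%:R / N%:R.
Fact Ln_key : unit. Proof. exact: tt. Qed.
Definition Ln (k : nat) : R := locked_with Ln_key (lin R N a k%:Z).

Lemma Ngt0 : (0 < N)%N. Proof. exact: leq_trans Ha HaN. Qed.
Lemma NR0 : (N%:R : R) != 0. Proof. by rewrite pnatr_eq0 -lt0n Ngt0. Qed.
Lemma xgt0 : 0 < xx.
Proof. by rewrite /xx divr_gt0 // ltr0n ?Ngt0. Qed.
Lemma yE : yy = 2 * xx. Proof. by rewrite /yy /xx mulrA. Qed.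
Lemma LnE k : Ln k = N%:R * (k%:R + xx).
Proof.
rewrite /Ln unlock /lin intrD intrM /= /xx.
have := NR0; move=> H; field; exact H.
Qed.
Lemma Ln_gt0 k : 0 < Ln k.
Proof. rewrite LnE mulr_gt0 // ?ltr0n ?Ngt0 //; apply: ltr_wpDl => //; exact: xgt0. Qed.
Lemma Ln0 k : Ln k != 0. Proof. by rewrite gt_eqF ?Ln_gt0. Qed.

Lemma pochS (z : R) m : poch z m.+1 = poch z m * (z + m%:R).
Proof. by rewrite /poch big_ord_recr. Qed.
Lemma poch_gt0 (z : R) m : 0 < z -> 0 < poch z m.
Proof. move=> hz; rewrite /poch; apply: prodr_gt0 => i _; exact: ltr_wpDr. Qed.

Definition A (n k : nat) : R :=
  if (k <= n)%N then N%:R * (poch xx n.+1) ^+ 2 / ((n - k)`!%:R * poch yy (n + k).+1) else 0.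

Lemma ygt0 : 0 < yy. Proof. rewrite yE mulr_gt0 //; exact: xgt0. Qed.

Lemma A_gt0 n k : (k <= n)%N -> 0 < A n k.
Proof.
move=> kn; rewrite /A kn; apply: divr_gt0.
  by rewrite mulr_gt0 ?ltr0n ?Ngt0 // exprn_gt0 // poch_gt0 // xgt0.
by rewrite mulr_gt0 ?ltr0n ?fact_gt0 // poch_gt0 // ygt0.
Qed.

Lemma R1 [n k] : (k <= n)%N ->
  A n.+1 k = A n k * (xx + n.+1%:R) ^+ 2 / ((n.+1 - k)%:R * (yy + (n + k).+1%:R)).
Proof.
move=> kn; rewrite /A kn (leq_trans kn (leqnSn _)) subSn // factS natrM.
rewrite (pochS xx n.+1) addSn (pochS yy (n+k).+1).
have h1 : poch xx n.+1 != 0 by rewrite gt_eqF ?poch_gt0 ?xgt0.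
have h2 : poch yy (n+k).+1 != 0 by rewrite gt_eqF ?poch_gt0 ?ygt0.
have h3 : ((n-k)`!%:R : R) != 0 by rewrite pnatr_eq0 -lt0n fact_gt0.
have h4 : ((n-k).+1%:R : R) != 0 by rewrite pnatr_eq0.
have h5 : yy + (n+k).+1%:R != 0 by rewrite gt_eqF // ltr_wpDr // ?ygt0.
rewrite -(subSn kn); move: h5; set t := yy + _ => h5; clearbody t.
field. by rewrite h5 h2 h3 subSn // pnatr_eq0.
Qed.

Ltac nzs := repeat (apply/andP; split); try done; try (apply: lt0r_neq0; nra).

Lemma A0 [n k] : (n < k)%N -> A n k = 0.
Proof. by move=> h; rewrite /A leqNgt h. Qed.

Lemma R2 [m j] : (j < m)%N ->
  A m j.+1 = A m j * (m - j)%:R / (yy + (m + j).+1%:R).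
Proof.
move=> jm; rewrite /A jm (ltnW jm) -(subnSK jm) factS natrM addnS (pochS yy (m+j).+1).
have h2 : poch yy (m+j).+1 != 0 by rewrite gt_eqF ?poch_gt0 ?ygt0.
have h3 : ((m-j.+1)`!%:R : R) != 0 by rewrite pnatr_eq0 -lt0n fact_gt0.
have h5 : yy + (m+j).+1%:R != 0 by rewrite gt_eqF // ltr_wpDr // ?ygt0.
move: h5; set t := yy + _ => h5; clearbody t.
field. by rewrite h5 h2 h3 /= addrC natr1 pnatr_eq0.
Qed.

Lemma E1 n k : \sum_(m < n.+1) A m k / Ln m ^+ 2 = A n k / Ln k ^+ 2.
Proof.
elim: n => [|n IH].
  rewrite big_ord1 /=; case: k => [|k]; [done | by rewrite A0 // !mul0r].
rewrite big_ord_recr /= IH.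
case: (ltngtP k n.+1) => hk.
- rewrite ltnS in hk; rewrite (R1 hk) !LnE yE natrB ?(leqW hk) //.
  have := xgt0; have : (k%:R : R) <= n%:R by rewrite ler_nat.
  have : (0 : R) <= k%:R by []. have := NR0.
  move=> h1 h2 h3 h4.
  field. nzs.
- by rewrite (A0 (ltnW hk)) (A0 hk) !mul0r addr0.
- by rewrite hk A0 // mul0r add0r.
Qed.

Lemma sum_widen m n (f : nat -> R) : (m <= n)%N -> (forall j, (m < j)%N -> f j = 0) ->
  \sum_(j < m.+1) f j = \sum_(j < n.+1) f j.
Proof.
move=> mn hf; rewrite (big_ord_widen n.+1 f) ?ltnS // big_mkcond /=.
apply: eq_bigr => i _; case: ifPn => // h; rewrite hf //; by rewrite ltnNge -ltnS.
Qed.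

Lemma REP n (g : nat -> R) : \sum_(j < n.+1) A n j * g j =
  \sum_(m < n.+1) (Ln m ^+ 2)^-1 * \sum_(j < m.+1) A m j * (Ln j ^+ 2 * g j).
Proof.
transitivity (\sum_(m < n.+1) \sum_(j < n.+1) (Ln m ^+ 2)^-1 * (A m j * (Ln j ^+ 2 * g j))); last first.
  apply: eq_bigr => [[m hm]] _ /=; rewrite big_distrr /=.
  symmetry; apply: (@sum_widen m n (fun j => (Ln m ^+ 2)^-1 * (A m j * (Ln j ^+ 2 * g j)))) => //.
  by move=> j hj; rewrite A0 // !mul0r mulr0.
rewrite exchange_big /=; apply: eq_bigr => j _.
transitivity ((\sum_(m < n.+1) A m j / Ln m ^+ 2) * (Ln j ^+ 2 * g j)); last first.
  rewrite big_distrl. apply: eq_bigr => m _. by rewrite /=; ring.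
rewrite E1; have := Ln0 j => h; field; by rewrite h.
Qed.

Lemma TEL m k (f B : nat -> R) : (k <= m)%N ->
  (forall j, (k <= j <= m)%N -> f j = B j - B j.+1) -> B m.+1 = 0 ->
  \sum_(j < m.+1) (if (k <= j)%N then f j else 0) = B k.
Proof.
move=> km hf hB; rewrite -big_mkcond /=.
have -> : \sum_(j < m.+1 | (k <= j)%N) f j = \sum_(k <= j < m.+1) f j.
  by rewrite big_geq_mkord.
rewrite (telescope_sumr_eq (fun j => - B j)) ?hB ?oppr0 ?sub0r ?opprK //.
  exact: leqW.
by move=> j hj; rewrite hf ?opprK 1?addrC // -ltnS.
Qed.

Lemma sum_delta m k (F : nat -> R) : (k <= m)%N ->
  \sum_(j < m.+1) (if (j : nat) == k then F j else 0) = F k.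
Proof.
elim: m => [|m IH] hk.
  by rewrite big_ord1 /=; move: hk; rewrite leqn0 => /eqP ->.
rewrite big_ord_recr /=; case: (ltngtP k m.+1) => h.
- by rewrite IH // addr0.
- by move: hk; rewrite leqNgt h.
- rewrite h big1 ?add0r // => j _; by rewrite ltn_eqF.
Qed.

Ltac posfacts j m :=
  have := xgt0; have : (0 : R) <= j%:R by []; have : (0 : R) <= m%:R by [];
  have := NR0.

Lemma E2raw m k : (k <= m)%N ->
  \sum_(j < m.+1) (if (k <= j)%N then A m j * Ln j else 0) = A m k * (Ln m + Ln k) / 2.
Proof.
move=> km; apply: (@TEL m k (fun j => A m j * Ln j) (fun j => A m j * (Ln m + Ln j) / 2)) => //; last first.
  by rewrite A0 // !mul0r.
move=> j /andP [kj jm]; case: (ltngtP j m) => hj.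
- rewrite (R2 hj) !LnE yE natrB ?(ltnW hj) //.
  posfacts j m => h1 h2 h3 h4. field. nzs.
- by move: jm; rewrite leqNgt hj.
- rewrite hj (A0 (ltnSn m)) !mul0r subr0 LnE; by field.
Qed.

Lemma E3raw m k : (k <= m)%N ->
  \sum_(j < m.+1) (if (k <= j)%N then (-1) ^+ j * A m j else 0) =
  (-1) ^+ k * A m k * (Ln m + Ln k) / (2 * Ln m).
Proof.
move=> km; apply: (@TEL m k (fun j => (-1) ^+ j * A m j)
   (fun j => (-1) ^+ j * A m j * (Ln m + Ln j) / (2 * Ln m))) => //; last first.
  by rewrite (A0 (ltnSn m)) !mulr0 !mul0r.
move=> j /andP [kj jm]; case: (ltngtP j m) => hj.
- rewrite (R2 hj) !LnE yE natrB ?(ltnW hj) // exprS.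
  posfacts j m => h1 h2 h3 h4. field. nzs.
- by move: jm; rewrite leqNgt hj.
- rewrite hj (A0 (ltnSn m)) !mulr0 !mul0r subr0 LnE. posfacts j m => h1 h2 h3 h4. field. nzs.
Qed.

Definition P0 (j : nat) : R := 2 * (-1) ^+ j * poch yy j / (j`!%:R * Ln j).

Lemma Zid m : (0 < m)%N -> \sum_(j < m.+1) A m j * (Ln j ^+ 2 * P0 j) = 0.
Proof.
move=> m0.
transitivity (\sum_(j < m.+1) (if (0 <= j)%N then A m j * (Ln j ^+ 2 * P0 j) else 0)).
  by apply: eq_bigr.
rewrite (@TEL m 0 (fun j => A m j * (Ln j ^+ 2 * P0 j))
   (fun j => A m j * (Ln j ^+ 2 * P0 j) * (j%:R * (m%:R + j%:R + yy) / (2 * m%:R * (j%:R + xx))))) //.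
- by rewrite !mul0r mulr0.
- move=> j /andP [_ jm]; case: (ltngtP j m) => hj.
  + rewrite (R2 hj) /P0 !LnE yE natrB ?(ltnW hj) // [(-1) ^+ j.+1]exprS pochS factS natrM.
    have hp : 0 < poch yy j by apply: poch_gt0; exact: ygt0.
    have hf : (0:R) < j`!%:R by rewrite ltr0n fact_gt0.
    have hm : (0:R) < m%:R by rewrite ltr0n.
    move: hp; rewrite yE => hp.
    posfacts j m => h1 h2 h3 h4. field. nzs.
  + by move: jm; rewrite leqNgt hj.
  + rewrite hj (A0 (ltnSn m)) !mul0r subr0 yE.
    have hm : (0:R) < m%:R by rewrite ltr0n.
    posfacts j m => h1 h2 h3 h4. field. nzs.
- by rewrite (A0 (ltnSn m)) !mul0r.
Qed.

Lemma triE (j k : nat) : tri j%:Z k%:Z = if j == k then 0%N else 1%N.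
Proof. by []. Qed.

Lemma sum_tri m k (F : nat -> R) : (k <= m)%N ->
  \sum_(j < m.+1) (if (k <= j)%N then F j * 2%:R ^+ tri j k else 0) =
  2 * \sum_(j < m.+1) (if (k <= j)%N then F j else 0) - F k.
Proof.
move=> km; rewrite -(sum_delta m k F km) mulr_sumr -sumrB; apply: eq_bigr => j _.
rewrite triE; case: eqP => [->|hjk]; first by rewrite leqnn expr0 mulr1; ring.
by case: ifP => _; rewrite ?expr1 ?subr0 ?mulr0 // mulrC.
Qed.

Lemma E2 m k : (k <= m)%N ->
  \sum_(j < m.+1) (if (k <= j)%N then A m j * Ln j * 2%:R ^+ tri j k else 0) = A m k * Ln m.
Proof.
move=> km; rewrite (sum_tri m k (fun j => A m j * Ln j) km) E2raw //; by field.
Qed.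

Lemma E3 m k : (k <= m)%N ->
  \sum_(j < m.+1) (if (k <= j)%N then (-1) ^+ j * A m j * 2%:R ^+ tri j k else 0) =
  (-1) ^+ k * Ln k * A m k / Ln m.
Proof.
move=> km; rewrite (sum_tri m k (fun j => (-1) ^+ j * A m j) km) E3raw //.
have := Ln0 m => h; field; by rewrite h.
Qed.

Fixpoint Wn (u j k : nat) : R :=
  match u with
  | 0 => 2%:R ^+ tri j k
  | u'.+1 => \sum_(l < j.+1) (if (k <= l)%N then 2%:R ^+ tri j l / Ln l * Wn u' l k else 0)
  end.

Lemma Du u m k : (k <= m)%N ->
  \sum_(j < m.+1) (if (k <= j)%N then (-1) ^+ j * A m j * Wn u j k else 0) =
  (-1) ^+ k * Ln k * A m k / Ln m ^+ u.+1.
Proof.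
elim: u m k => [|u IH] m k km; first by rewrite E3 // expr1.
pose G (j l : nat) := if [&& (k <= l)%N & (l <= j)%N]
   then (-1) ^+ j * A m j * (2%:R ^+ tri j l / Ln l * Wn u l k) else 0.
transitivity (\sum_(j < m.+1) \sum_(l < m.+1) G j l).
  apply: eq_bigr => [[j hj]] _ /=.
  case: ifP => kj; last first.
    rewrite big1 // => l _; rewrite /G; case: ifP => // /andP [kl lj].
    by move: kj; rewrite (leq_trans kl lj).
  rewrite big_distrr /=.
  transitivity (\sum_(l < j.+1) (if (l <= j)%N then (-1) ^+ j * A m j *
     (if (k <= l)%N then 2%:R ^+ tri j l / Ln l * Wn u l k else 0) else 0)).
    apply: eq_bigr => [[l hl]] _ /=. have hl2 : (l <= j)%N. by rewrite -ltnS. rewrite hl2. reflexivity.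
  rewrite (@sum_widen j m (fun l => (if (l <= j)%N then (-1) ^+ j * A m j *
     (if (k <= l)%N then 2%:R ^+ tri j l / Ln l * Wn u l k else 0) else 0))) //; last first.
    by move=> l hl; rewrite leqNgt hl.
  apply: eq_bigr => l _; rewrite /G; case: (k <= l)%N; case: (l <= j)%N => //=.
  by rewrite mulr0.
rewrite exchange_big /=.
transitivity (\sum_(l < m.+1) (Ln m)^-1 * (if (k <= l)%N then (-1) ^+ l * A m l * Wn u l k else 0)).
  apply: eq_bigr => [[l hl]] _ /=.
  case: ifP => kl; last first.
    rewrite mulr0 big1 // => j _; by rewrite /G kl.
  transitivity (Wn u l k / Ln l * \sum_(j < m.+1)
     (if (l <= j)%N then (-1) ^+ j * A m j * 2%:R ^+ tri j l else 0)).
    rewrite big_distrr; apply: eq_bigr => j _ /=; rewrite /G kl /=.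
    case: ifP => _; last by rewrite mulr0.
    ring.
  rewrite E3 //; have := Ln0 l => h1; have := Ln0 m => h2; field; by rewrite h1 h2.
rewrite -big_distrr IH //= exprS.
have := Ln0 m => h2. rewrite !exprS. have ht : Ln m ^+ u != 0 by rewrite expf_neq0 // Ln0. move: ht; move: (Ln m ^+ u) => t ht. field. by rewrite ht h2.
Qed.

Definition kern (c j k : nat) : R :=
  if (k <= j)%N then
    (if c == 1%N then 2%:R ^+ tri j k / Ln j
     else if c == 2%N then (if j == k then (Ln k ^+ 2)^-1 else 0)
     else (-1) ^+ (j + k) * Wn (c - 3) j k / (Ln j ^+ 2 * Ln k))
  else 0.

Lemma kern0 c j k : (j < k)%N -> kern c j k = 0.
Proof. by move=> h; rewrite /kern leqNgt h. Qed.

Lemma sgn2 k : (-1) ^+ k * (-1) ^+ k = 1 :> R.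
Proof. by rewrite -exprD addnn -mul2n exprM sqrrN !expr1n. Qed.

Lemma Dc c m k : (0 < c)%N -> (k <= m)%N ->
  \sum_(j < m.+1) A m j * (Ln j ^+ 2 * kern c j k) = A m k * Ln m ^+ 2 / Ln m ^+ c.
Proof.
case: c => [//|[|[|u]]] _ km.
- transitivity (\sum_(j < m.+1) (if (k <= j)%N then A m j * Ln j * 2%:R ^+ tri j k else 0)).
    apply: eq_bigr => j _; rewrite /kern /=; case: ifP => _; last by rewrite !mulr0.
    have := Ln0 j; move: (2%:R ^+ tri j k) => T h; field; by rewrite h.
  rewrite E2 //; have := Ln0 m => h; field; by rewrite h.
- transitivity (\sum_(j < m.+1) (if (j : nat) == k then A m j else 0)).
    apply: eq_bigr => j _; rewrite /kern /=; case: eqP => [->|_].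
      rewrite leqnn; have := Ln0 k => h; field; by rewrite h.
    by case: ifP => _; rewrite !mulr0.
  rewrite sum_delta //; have := Ln0 m => h; field; by rewrite h.
- transitivity ((-1) ^+ k / Ln k * \sum_(j < m.+1)
     (if (k <= j)%N then (-1) ^+ j * A m j * Wn u j k else 0)).
    rewrite big_distrr; apply: eq_bigr => j _; rewrite /kern /=.
    case: ifP => _; last by rewrite !mulr0.
    rewrite !subSS subn0 exprD.
    have := Ln0 j => h1; have := Ln0 k => h2.
    move: ((-1) ^+ j) ((-1) ^+ k) (Wn u j k) => s1 s2 w. field. by rewrite h1 h2.
  rewrite Du //. have := Ln0 m => h2. have := Ln0 k => h1. rewrite !exprS.
  have ht : Ln m ^+ u != 0 by rewrite expf_neq0 // Ln0.
  have hs := sgn2 k.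
  move: ht hs; move: (Ln m ^+ u) ((-1) ^+ k) => t s ht hs.
  transitivity (s * s * (A m k / (Ln m * t))); first by field; rewrite h1 h2 ht.
  rewrite hs mul1r expr0; field; by rewrite h2 ht.
Qed.

Lemma KEY c n k : (0 < c)%N ->
  \sum_(m < n.+1) A m k / Ln m ^+ c = \sum_(j < n.+1) A n j * kern c j k.
Proof.
move=> c0; rewrite (REP n (fun j => kern c j k)); apply: eq_bigr => [[m hm]] _ /=.
case: (leqP k m) => km.
  rewrite Dc //; have := Ln0 m => h.
  have ht : Ln m ^+ c != 0 by rewrite expf_neq0.
  move: ht; move: (Ln m ^+ c) => t ht; field; by rewrite h ht.
rewrite A0 // mul0r big1 ?mulr0 // => j _; rewrite kern0 ?mulr0 //.
exact: leq_trans (ltn_ord j) km.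
Qed.

Fixpoint Pf (s : seq nat) (j : nat) : R :=
  match s with
  | [::] => P0 j
  | c :: s' => \sum_(k < j.+1) kern c j k * Pf s' k
  end.

Lemma base n : \sum_(k < n.+1) A n k * P0 k = 1.
Proof.
rewrite REP big_ord_recl [X in _ + X]big1 ?addr0; last first.
  by move=> i _; rewrite Zid // mulr0.
rewrite big_ord1 /= /A /P0 /= /poch !big_ord1 /= !LnE yE.
have := NR0 => h1; have := xgt0 => h2.
rewrite fact0 big_ord0 expr0. field. nzs.
Qed.

Lemma lin_pow (m c : nat) : lin R N a m ^ (- c%:Z) = (Ln m ^+ c)^-1.
Proof. by rewrite /Ln unlock -exprnN. Qed.

Lemma T1 (s : seq nat) : all (fun c => 0 < c)%N s ->
  forall n, tstar R N a n s = \sum_(k < n.+1) A n k * Pf s k.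
Proof.
elim: s => [|c s IH] /=; first by move=> _ n; rewrite base.
move=> /andP [c0 hs] n.
transitivity (\sum_(m < n.+1) \sum_(k < n.+1) (Ln m ^+ c)^-1 * (A m k * Pf s k)).
  apply: eq_bigr => [[m hm]] _ /=; rewrite lin_pow IH // big_distrr /=.
  apply: (@sum_widen m n (fun k => (Ln m ^+ c)^-1 * (A m k * Pf s k))) => //.
  by move=> j hj; rewrite A0 // mul0r mulr0.
rewrite exchange_big /=.
transitivity (\sum_(k < n.+1) Pf s k * \sum_(j < n.+1) A n j * kern c j k).
  apply: eq_bigr => k _; rewrite -KEY // big_distrr; apply: eq_bigr => m _ /=.
  by move: (Ln m ^+ c) => t; ring.
transitivity (\sum_(j < n.+1) \sum_(k < n.+1) A n j * (kern c j k * Pf s k)).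
  rewrite exchange_big; apply: eq_bigr => k _; rewrite big_distrr; apply: eq_bigr => j _ /=.
  by ring.
apply: eq_bigr => [[j hj]] _ /=; rewrite big_distrr /=; symmetry.
apply: (@sum_widen j n (fun k => A n j * (kern c j k * Pf s k))) => //.
by move=> k hk; rewrite kern0 // mul0r mulr0.
Qed.

Lemma linLn (m : nat) : lin R N a m%:Z = Ln m.
Proof. by rewrite /Ln unlock. Qed.

Lemma linpw (m p q : nat) : (q <= p)%N ->
  lin R N a m%:Z ^ (p%:Z - q%:Z) = Ln m ^+ p / Ln m ^+ q.
Proof.
move=> qp; rewrite linLn subzn // -exprnP expfB_cond //.
by rewrite (negbTE (Ln0 m)).
Qed.

Lemma Pf2 s j : Pf (2%N :: s) j = Pf s j / Ln j ^+ 2.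
Proof.
rewrite /=.
transitivity (\sum_(k < j.+1) (if (k : nat) == j then Pf s j / Ln j ^+ 2 else 0)).
  apply: eq_bigr => [[k hk]] _ /=; rewrite /kern /= -ltnS hk.
  case: eqP => [->|hne]; first by rewrite eqxx mulrC.
  by case: eqP => [h|_]; [by move: hne; rewrite h | rewrite mul0r].
exact: (sum_delta j j (fun _ => Pf s j / Ln j ^+ 2) (leqnn j)).
Qed.

Lemma Pf_nseq b s j : Pf (nseq b 2%N ++ s) j = Pf s j / Ln j ^+ (2 * b).
Proof.
elim: b => [|b IH]; first by rewrite muln0 expr0 divr1.
change (Pf (2%N :: (nseq b 2%N ++ s)) j = Pf s j / Ln j ^+ (2 * b.+1)).
rewrite Pf2 IH mulnS exprD.
have h1 : Ln j ^+ (2 * b) != 0 by rewrite expf_neq0 // Ln0.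
have h2 := Ln0 j.
move: h1; move: (Ln j ^+ (2 * b)) => t h1; field; by rewrite h1 h2.
Qed.

Lemma shift_sum l k (F : nat -> R) : (k <= l)%N ->
  \sum_(i < (l - k).+1) F (k + i)%N = \sum_(l' < l.+1) (if (k <= l')%N then F l' else 0).
Proof.
move=> kl.
transitivity (\sum_(k <= i < l.+1) F i); last by rewrite big_geq_mkord big_mkcond.
have -> : \sum_(k <= i < l.+1) F i = \sum_(0 + k <= i < l.+1) F i by [].
rewrite big_addn big_mkord subSn //.
by apply: eq_bigr => i _; rewrite addnC.
Qed.

Lemma WrecE u l k : (k <= l)%N -> Wrec R N a l%:Z k%:Z (nseq u 1%N) = Wn u l k.
Proof.
elim: u l => [|u IH] l kl; first by [].
rewrite /= subzn //=.
rewrite -(shift_sum l k (fun l' => 2%:R ^+ tri l l' / Ln l' * Wn u l' k) kl).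
apply: eq_bigr => [[i hi]] _ /=.
have ki : (k + i <= l)%N by rewrite -leq_subRL // -ltnS.
rewrite -PoszD lez_nat ki IH ?leq_addr // lin_pow expr1.
reflexivity.
Qed.

Lemma WsharpE u j k : (k <= j)%N -> Wsharp R N a j%:Z k%:Z (nseq u 1%N) = Wn u j k.
Proof.
move=> kj; rewrite /Wsharp lez_nat kj andbT; case: u => [|u]; first by [].
change (Wrec R N a j%:Z k%:Z (nseq u.+1 1%N) = Wn u.+1 j k); exact: WrecE.
Qed.

Lemma tindex_S d (c b : nat -> nat) :
  tindex d.+1 c b = nseq (b 0%N) 2%N ++ c 1%N :: tindex d (fun i => c i.+1) (fun i => b i.+1).
Proof.
rewrite /tindex.
have -> : iota 1 d.+1 = 1%N :: [seq i.+1 | i <- iota 1 d].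
  by rewrite /= -(iotaDl 1 1 d).
by rewrite map_cons -map_comp.
Qed.

Definition Fks (d : nat) (c b : nat -> nat) (ks : seq nat) : R :=
  let k i := nth 0%N ks i in
  (poch yy (k d) / ((k d)`!%:R * lin R N a (k d))) *
  \prod_(i < d.+1)
        ((-1) ^+ (k i * deltai d c i)
          / lin R N a (k i) ^ ((2 * b i + 3)%N%:Z - (deltai d c i)%:Z)
          * Wsharp R N a (kprev ks i) (k i) (nseq (cext d c i - 3) 1%N)).

Lemma sgn3 k : (-1) ^+ (k * 3) = (-1) ^+ k :> R.
Proof. by rewrite exprM !exprS expr0 mulr1 mulrA sgn2 mul1r. Qed.

Lemma CL0 c b k0 : Fks 0 c b [:: k0] = Pf (tindex 0 c b) k0.
Proof.
rewrite /tindex /= Pf_nseq /Fks big_ord1 /= /deltai /cext /deltaf /=.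
rewrite sgn3 linpw ?leq_addl // linLn /P0 /Wsharp /kprev /= exprD.
have h1 : Ln k0 ^+ (2 * b 0%N) != 0 by rewrite expf_neq0 // Ln0.
have h2 := Ln0 k0.
have h3 : (k0`!%:R : R) != 0 by rewrite pnatr_eq0 -lt0n fact_gt0.
move: h1 h3; move: (Ln k0 ^+ (2 * b 0%N)) ((-1) ^+ k0 : R) (k0`!%:R : R) (poch yy k0) => t s f p h1 h3.
field. by rewrite h1 h2 h3.
Qed.

Lemma cextS d (c : nat -> nat) i : cext d.+1 c i.+2 = cext d (fun i => c i.+1) i.+1.
Proof. by []. Qed.

Lemma deltaiS d (c : nat -> nat) i : deltai d.+1 c i.+2 = deltai d (fun i => c i.+1) i.+1.
Proof. by rewrite /deltai cextS cextS. Qed.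

Lemma Wsharp_m1 k : Wsharp R N a (-1) k%:Z [::] = 2.
Proof. by rewrite /Wsharp /= expr1. Qed.

Lemma deltaf_le2 x : (deltaf x <= 2)%N.
Proof. by rewrite /deltaf; case: ifP => //; case: ifP. Qed.

Lemma FksS d (c b : nat -> nat) k0 k1 t : (k1 <= k0)%N -> (1 <= c 1%N)%N -> c 1%N <> 2%N ->
  Fks d.+1 c b [:: k0, k1 & t] =
  (Ln k0 ^+ (2 * b 0%N))^-1 * kern (c 1%N) k0 k1 * Fks d (fun i => c i.+1) (fun i => b i.+1) (k1 :: t).
Proof.
move=> k10 hc1 hc2.
rewrite /Fks big_ord_recl big_ord_recl [in RHS]big_ord_recl.
have -> : \prod_(i < d)
   ((-1) ^+ (nth 0%N [:: k0, k1 & t] (lift ord0 (lift ord0 i)) * deltai d.+1 c (lift ord0 (lift ord0 i))) /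
    lin R N a (nth 0%N [:: k0, k1 & t] (lift ord0 (lift ord0 i))) ^
    ((2 * b (lift ord0 (lift ord0 i)) + 3)%N%:Z - (deltai d.+1 c (lift ord0 (lift ord0 i)))%:Z) *
    Wsharp R N a (kprev [:: k0, k1 & t] (lift ord0 (lift ord0 i)))
      (nth 0%N [:: k0, k1 & t] (lift ord0 (lift ord0 i)))
      (nseq (cext d.+1 c (lift ord0 (lift ord0 i)) - 3) 1%N)) =
  \prod_(i < d)
   ((-1) ^+ (nth 0%N (k1 :: t) (lift ord0 i) * deltai d (fun i => c i.+1) (lift ord0 i)) /
    lin R N a (nth 0%N (k1 :: t) (lift ord0 i)) ^
    ((2 * b (lift ord0 i).+1 + 3)%N%:Z - (deltai d (fun i => c i.+1) (lift ord0 i))%:Z) *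
    Wsharp R N a (kprev (k1 :: t) (lift ord0 i)) (nth 0%N (k1 :: t) (lift ord0 i))
      (nseq (cext d (fun i => c i.+1) (lift ord0 i) - 3) 1%N)).
  apply: eq_bigr => i _; rewrite !lift0 deltaiS cextS //.
rewrite /=.
move: (\prod_(i < d) _) => T.
move: (poch yy (nth 0%N (k1 :: t) d) / _) => F.
rewrite (_ : bump 0 0 = 1%N) // /= (WsharpE _ _ _ k10) !Wsharp_m1 /deltai /cext /=.
rewrite !eqSS.
have hv := deltaf_le2 (if 0 == d then 0%N else c 2%N).
move: hv; move: (deltaf (if 0 == d then 0%N else c 2%N)) => v hv.
have hL0 := Ln0 k0; have hL1 := Ln0 k1.
have hZ : Ln k0 ^+ (2 * b 0%N) != 0 by rewrite expf_neq0.
have hX : Ln k1 ^+ (2 * b 1%N + 3) != 0 by rewrite expf_neq0.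
have hY : Ln k1 ^+ v != 0 by rewrite expf_neq0.
case hc: (c 1%N) hc1 hc2 => [|[|[|w]]] // _ _.
- rewrite /deltaf /= !linpw; try lia.
  rewrite /kern k10 /= exprM expr2 sgn2 exprD (exprD _ 1 v) expr1.
  move: hZ hX hY; move: (Ln k0 ^+ (2 * b 0%N)) (Ln k1 ^+ (2 * b 1%N + 3)) (Ln k1 ^+ v)
    ((-1) ^+ (k1 * (1 + v)) : R) (2%:R ^+ tri k0 k1 : R) => Z X Y s1 tw hZ hX hY.
  rewrite (_ : (1 + 1 = 2)%N) //. field. by rewrite hZ hX hY hL0 hL1.
- rewrite /deltaf /= !linpw; try lia.
  rewrite /kern k10 /= !subSS subn0 addn0 muln1 add0n.
  rewrite (mulnDr k1 1 v) muln1 (exprD (-1 : R) k1 (k1 * v)) (exprD (-1 : R) k0 k1).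
  rewrite (exprD (Ln k1) 1 v) expr1 (exprD (Ln k0) (2 * b 0%N) 3).
  have hs := sgn2 k1.
  move: hZ hX hY hs; move: (Ln k0 ^+ (2 * b 0%N)) (Ln k1 ^+ (2 * b 1%N + 3)) (Ln k1 ^+ v)
    ((-1) ^+ k1 : R) ((-1) ^+ k0 : R) ((-1) ^+ (k1 * v) : R) (Wn w k0 k1)
     => Z X Y s1 s0 sg W hZ hX hY hs.
  transitivity (s1 * s1 * (F * s0 * 2 * sg * Y * W * T / (Z * Ln k0 ^+ 2 * X))).
    rewrite hs mul1r; field; by rewrite hZ hX hY hL0.
  field; by rewrite hZ hX hY hL0 hL1.
Qed.

Lemma iota_sum k (G : nat -> R) : \sum_(k1 <- iota 0 k.+1) G k1 = \sum_(k1 < k.+1) G k1.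
Proof. have -> : iota 0 k.+1 = index_iota 0 k.+1 by rewrite /index_iota subn0. exact: big_mkord. Qed.

Lemma CL d : forall (c b : nat -> nat) k0,
  (forall i, (1 <= i <= d)%N -> (1 <= c i)%N /\ c i <> 2%N) ->
  \sum_(t <- chains k0 d) Fks d c b (k0 :: t) = Pf (tindex d c b) k0.
Proof.
elim: d => [|d IH] c b k0 hc; first by rewrite /= big_seq1 CL0.
have [hc1 hc2] : (1 <= c 1%N)%N /\ c 1%N <> 2%N by apply: hc.
rewrite (_ : chains k0 d.+1 = flatten [seq [seq k :: t | t <- chains k d] | k <- iota 0 k0.+1]) //.
rewrite big_flatten big_map iota_sum tindex_S Pf_nseq /=.
rewrite mulr_suml; apply: eq_bigr => [[k1 hk1]] _ /=.
rewrite big_map.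
transitivity (\sum_(t <- chains k1 d) (Ln k0 ^+ (2 * b 0%N))^-1 * kern (c 1%N) k0 k1 *
   Fks d (fun i => c i.+1) (fun i => b i.+1) (k1 :: t)).
  by apply: eq_bigr => t _; rewrite FksS // -ltnS.
rewrite -big_distrr IH /=; first by move: (Ln k0 ^+ (2 * b 0%N)) => z; ring.
by move=> i /andP [h1 h2]; apply: hc; rewrite /= ltnS h2.
Qed.

End Proof.

Lemma tindex_pos d (c b : nat -> nat) :
  (forall i, (1 <= i <= d)%N -> (1 <= c i)%N /\ c i <> 2%N) ->
  all (fun c => 0 < c)%N (tindex d c b).
Proof.
move=> hc; apply/allP => x; rewrite /tindex mem_cat => /orP [/nseqP [-> _] // |].
move=> /flattenP [s /mapP [i hi ->]]; rewrite in_cons => /orP [/eqP -> | /nseqP [-> _] //].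
by case: (hc i) => //; move: hi; rewrite mem_iota add1n ltnS.
Qed.


Theorem mainTheorem4 (R : realFieldType) (a N : nat) (n d : nat)
    (c b : nat -> nat) :
  (1 <= a)%N -> (a <= N)%N ->
  (forall i, (1 <= i <= d)%N -> (1 <= c i)%N /\ c i <> 2%N) ->
  tstar R N a n (tindex d c b) =
  \sum_(ks <- chains n d.+1)
    let k i := nth 0%N ks i in
    (N%:R * (poch (a%:R / N%:R) n.+1) ^+ 2
      / ((n - k 0%N)`!%:R * poch (2 * a%:R / N%:R : R) (n + k 0%N).+1))
    * (poch (2 * a%:R / N%:R : R) (k d) / ((k d)`!%:R * lin R N a (k d)))
    * \prod_(i < d.+1)
        ((-1) ^+ (k i * deltai d c i)
          / lin R N a (k i) ^ ((2 * b i + 3)%N%:Z - (deltai d c i)%:Z)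
          * Wsharp R N a (kprev ks i) (k i) (nseq (cext d c i - 3) 1%N)).
Proof.
move=> Ha HaN hc.
rewrite (@T1 R a N Ha HaN _ (tindex_pos d c b hc) n).
rewrite (_ : chains n d.+1 = flatten [seq [seq k :: t | t <- chains k d] | k <- iota 0 n.+1]) //.
rewrite big_flatten big_map iota_sum.
apply: eq_bigr => [[k0 hk0]] _ /=.
rewrite big_map -(@CL R a N Ha HaN d c b k0 hc) big_distrr.
apply: eq_bigr => t _ /=.
rewrite /Fks /A -ltnS hk0 /= mulrA.
reflexivity.
Qed.
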